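(* If a partial coloring of an $n\times n$ square $A$ uniquely extends to $L(n,2n-2)$, then $A$ has no three uncolored entries in the same row, and no three uncolored entries in the same column.
   Context: For positive integers $n,k$, let $\mathcal{L}_{n,k}$ be the set of $n\times n$ squares all of whose entries are colored with colors from a fixed set of $k$ colors $\{1,\dots,k\}$ such that any two entries in the same row, or in the same column, have different colors. Entries are indexed $(i,j)$, $i$ the row and $j$ the column. A partial coloring of an $n\times n$ square assigns colors from $\{1,\dots,k\}$ to some of its entries; the remaining entries are called uncolored. A partial coloring extends to $L(n,k)$ if the uncolored entries can be colored so that the resulting fully colored square lies in $\mathcal{L}_{n,k}$ (keeping the given colors), and it uniquely extends to $L(n,k)$ if there is exactly one such way. *)

(* Defs.v *)
From mathcomp Require Import all_boot.
Set Implicit Arguments. Unset Strict Implicit. Unset Printing Implicit Defensive.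

(* A fully colored n x n square with colors in 'I_k (colors {1..k} shifted to {0..k-1}). *)
Definition square (n k : nat) := {ffun 'I_n * 'I_n -> 'I_k}.
(* A partial coloring: None = uncolored. *)
Definition pcoloring (n k : nat) := {ffun 'I_n * 'I_n -> option 'I_k}.

Definition in_L (n k : nat) (L : square n k) : Prop :=
  (forall i j j', j != j' -> L (i, j) != L (i, j')) /\
  (forall i i' j, i != i' -> L (i, j) != L (i', j)).

Definition extends (n k : nat) (A : pcoloring n k) (L : square n k) : Prop :=
  forall e c, A e = Some c -> L e = c.

Definition uniquely_extends (n k : nat) (A : pcoloring n k) : Prop :=
  exists L, (in_L L /\ extends A L) /\
            forall L', in_L L' -> extends A L' -> L' = L.

(* Main.v *)
Require Import Defs.
From mathcomp Require Import all_boot zify.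
Set Implicit Arguments. Unset Strict Implicit.

Ltac slv := solve [ do !split; first [assumption | rewrite eq_sym; assumption
   | left; assumption | right; left; assumption | right; right; assumption
   | left; rewrite eq_sym; assumption | right; left; rewrite eq_sym; assumption
   | right; right; rewrite eq_sym; assumption] ].

Lemma pick3 (T : eqType) (P1 P2 P3 : T -> Prop) c1 c2 c3 d1 d2 d3 :
  c1 != c2 -> c1 != c3 -> c2 != c3 -> d1 != c1 -> d2 != c2 -> d3 != c3 ->
  P1 c1 -> P2 c2 -> P3 c3 -> P1 d1 -> P2 d2 -> P3 d3 ->
  exists e1 e2 e3, P1 e1 /\ P2 e2 /\ P3 e3 /\ e1 != e2 /\ e1 != e3 /\ e2 != e3 /\
    (e1 != c1 \/ e2 != c2 \/ e3 != c3).
Proof.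
move=> c12 c13 c23 dc1 dc2 dc3 p1 p2 p3 q1 q2 q3.
have [b|] := boolP ((d1 != c2) && (d1 != c3)).
  by move/andP: b => [b1 b2]; exists d1, c2, c3; slv.
have [b'|] := boolP ((d2 != c1) && (d2 != c3)).
  by move/andP: b' => [b1 b2]; exists c1, d2, c3; slv.
have [b''|] := boolP ((d3 != c1) && (d3 != c2)).
  by move/andP: b'' => [b1 b2]; exists c1, c2, d3; slv.
rewrite !negb_and !negbK.
case/orP=> /eqP E3; case/orP=> /eqP E2; case/orP=> /eqP E1; subst d1 d2 d3;
  first [ exists c1, c3, c2; slv | exists c2, c1, c3; slv | exists c3, c2, c1; slv
        | exists c2, c3, c1; slv | exists c3, c1, c2; slv ].
Qed.

Lemma modify n k (A : pcoloring n k) (L : square n k) i (g : 'I_n -> 'I_k) :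
  in_L L -> extends A L -> (forall j j', j != j' -> g j != g j') ->
  (forall j i', i' != i -> g j != L (i', j)) ->
  (forall j, A (i, j) = None \/ g j = L (i, j)) ->
  exists L', (in_L L' /\ extends A L') /\ (forall j, L' (i, j) = g j).
Proof.
move=> [Hr Hc] HA Hg Hgc Hext.
exists [ffun e => if e.1 == i then g e.2 else L e]; split; last by move=> j; rewrite ffunE eqxx.
split; first split.
- move=> i0 j j' jj; rewrite !ffunE /=; case: ifP => _; [exact: Hg | exact: Hr].
- move=> i1 i2 j ii; rewrite !ffunE /=.
  case: (eqVneq i1 i) => [E|N1]; case: (eqVneq i2 i) => [E'|N2].
  + by subst; rewrite eqxx in ii.
  + exact: Hgc.
  + by rewrite eq_sym; apply: Hgc.
  + exact: Hc.
- move=> [a b] c /= Hs; rewrite ffunE /=.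
  case: (eqVneq a i) => [E|N]; last exact: HA.
  subst; case: (Hext b) => [Hn|->]; first by rewrite Hn in Hs.
  exact: HA.
Qed.

Lemma avail n (L : square n (2 * n - 2)) (i j j1 j2 j3 : 'I_n) :
  j1 != j2 -> j1 != j3 -> j2 != j3 ->
  exists d, d != L (i, j) /\
    (forall i', i' != i -> d != L (i', j)) /\
    (forall j', j' != j1 -> j' != j2 -> j' != j3 -> d != L (i, j')).
Proof.
move=> d12 d13 d23.
set S := [set j' : 'I_n | [&& j' != j1, j' != j2 & j' != j3]].
set F := [set L (i', j) | i' in [set~ i]] :|: [set L (i, j') | j' in S].
have cT : #|[set j1; j2; j3]| = 3.
  rewrite -setUA !cardsU1 cards1 !inE (negbTE d12) (negbTE d13) (negbTE d23) /=; done.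
have hT := max_card [set j1; j2; j3]; rewrite cT card_ord in hT.
have hS : #|S| <= n - 3.
  have : S \subset ~: [set j1; j2; j3].
    apply/subsetP => x; rewrite !inE => /and3P [a b c].
    by rewrite (negbTE a) (negbTE b) (negbTE c).
  move/subset_leq_card => h; have := cardsCs (~: [set j1; j2; j3]).
  rewrite setCK cT card_ord; lia.
have hF : #|F| <= (n - 1) + (n - 3).
  rewrite /F cardsU; apply: (leq_trans (leq_subr _ _)).
  apply: leq_add; last exact: (leq_trans (leq_imset_card _ _) hS).
  by apply: (leq_trans (leq_imset_card _ _)); rewrite cardsC1 card_ord; lia.
have hC : 2 <= #|~: F|.
  have := cardsCs F; rewrite card_ord; lia.
have : 0 < #|~: F :\ L (i, j)|.
  have := cardsD1 (L (i, j)) (~: F); case: (L (i, j) \in ~: F); lia.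
case/card_gt0P => d; rewrite !inE => /andP [dn dF].
exists d; split; first by [].
split.
- move=> i' ii; apply: contraNN dF => /eqP ->; apply/orP; left.
  by apply: imset_f; rewrite !inE.
- move=> j' a b c; apply: contraNN dF => /eqP ->; apply/orP; right.
  by apply: imset_f; rewrite !inE a b c.
Qed.

Lemma row_case n (A : pcoloring n (2 * n - 2)) : uniquely_extends A ->
  forall (i j1 j2 j3 : 'I_n), j1 != j2 -> j1 != j3 -> j2 != j3 ->
  A (i, j1) = None -> A (i, j2) = None -> A (i, j3) = None -> False.
Proof.
move=> [L [[HL HA] Hu]] i j1 j2 j3 d12 d13 d23 a1 a2 a3.
have HL' := HL; case: HL' => [Hr Hc].
pose P j x := (forall i', i' != i -> x != L (i', j)) /\
    (forall j', j' != j1 -> j' != j2 -> j' != j3 -> x != L (i, j')).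
have Pc : forall j, j = j1 \/ j = j2 \/ j = j3 -> P j (L (i, j)).
  move=> j hj; split; first by move=> i' ii; apply: Hc; rewrite eq_sym.
  move=> j' a b c; apply: Hr; case: hj => [->|[->|->]]; by rewrite eq_sym.
have [x1 [x1n x1P]] := @avail n L i j1 j1 j2 j3 d12 d13 d23.
have [x2 [x2n x2P]] := @avail n L i j2 j1 j2 j3 d12 d13 d23.
have [x3 [x3n x3P]] := @avail n L i j3 j1 j2 j3 d12 d13 d23.
have [e1 [e2 [e3 [p1 [p2 [p3 [n12 [n13 [n23 hne]]]]]]]]] :=
  @pick3 _ (P j1) (P j2) (P j3) _ _ _ x1 x2 x3 (Hr i _ _ d12) (Hr i _ _ d13) (Hr i _ _ d23)
   x1n x2n x3n (Pc j1 (or_introl erefl)) (Pc j2 (or_intror (or_introl erefl)))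
   (Pc j3 (or_intror (or_intror erefl))) x1P x2P x3P.
pose g j := if j == j1 then e1 else if j == j2 then e2 else if j == j3 then e3 else L (i, j).
have gE : forall j, (j = j1 /\ g j = e1 /\ P j e1) \/ (j = j2 /\ g j = e2 /\ P j e2) \/
    (j = j3 /\ g j = e3 /\ P j e3) \/
    ([/\ j != j1, j != j2 & j != j3] /\ g j = L (i, j)).
  move=> j; rewrite /g; case: (eqVneq j j1) => [->|h1]; first by left.
  case: (eqVneq j j2) => [->|h2]; first by right; left.
  case: (eqVneq j j3) => [->|h3]; first by right; right; left.
  by right; right; right.
have [L' [[HL' HA'] HL'g]] : exists L', (in_L L' /\ extends A L') /\ (forall j, L' (i, j) = g j).
  apply: (@modify n _ A L i g) => //.
  - move=> j j' jj.
    case: (gE j) => [[E0 [-> [_ q]]]|[[E0 [-> [_ q]]]|[[E0 [-> [_ q]]]|[[h1 h2 h3] ->]]]];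
    case: (gE j') => [[E [-> [_ q']]]|[[E [-> [_ q']]]|[[E [-> [_ q']]]|[[h1' h2' h3'] ->]]]];
      try subst j'; try subst j; rewrite ?eqxx in jj => //; try (by rewrite eq_sym);
      try (by apply: q); try (by rewrite eq_sym; apply: q'); exact: Hr.
  - move=> j i' ii.
    case: (gE j) => [[-> [-> [q _]]]|[[-> [-> [q _]]]|[[-> [-> [q _]]]|[_ ->]]]];
      try (by apply: q); by rewrite eq_sym; apply: Hc.
  - move=> j.
    case: (gE j) => [[-> _]|[[-> _]|[[-> _]|[_ ->]]]]; by [left | right].
have E := Hu L' HL' HA'; subst L'.
have g1 : g j1 = e1 by rewrite /g eqxx.
have g2 : g j2 = e2 by rewrite /g eq_sym (negbTE d12) eqxx.
have g3 : g j3 = e3 by rewrite /g eq_sym (negbTE d13) eq_sym (negbTE d23) eqxx.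
move: (HL'g j1) (HL'g j2) (HL'g j3); rewrite g1 g2 g3 => E1 E2 E3.
by case: hne => [|[|]]; rewrite -?E1 -?E2 -?E3 eqxx.
Qed.

Definition trs n k (L : square n k) : square n k := [ffun e => L (e.2, e.1)].
Definition trp n k (A : pcoloring n k) : pcoloring n k := [ffun e => A (e.2, e.1)].

Lemma trsK n k (L : square n k) : trs (trs L) = L.
Proof. by apply/ffunP => -[a b]; rewrite !ffunE. Qed.

Lemma trs_in n k (L : square n k) : in_L L -> in_L (trs L).
Proof. by case=> Hr Hc; split=> *; rewrite !ffunE /=; [apply: Hc | apply: Hr]. Qed.

Lemma trs_ext n k (A : pcoloring n k) L : extends A L -> extends (trp A) (trs L).
Proof. by move=> H [a b] c; rewrite !ffunE /=; apply: H. Qed.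

Lemma trs_ext' n k (A : pcoloring n k) L : extends (trp A) L -> extends A (trs L).
Proof. by move=> H [a b] c E; rewrite !ffunE /=; apply: H; rewrite ffunE. Qed.

Lemma tr_unique n k (A : pcoloring n k) : uniquely_extends A -> uniquely_extends (trp A).
Proof.
move=> [L [[HL HA] Hu]]; exists (trs L); split; first by split; [apply: trs_in | apply: trs_ext].
move=> L' HL' HA'; rewrite -(trsK L'); congr trs; apply: Hu.
  exact: trs_in. exact: trs_ext'.
Qed.

Theorem lemma1 (n : nat) (A : pcoloring n (2 * n - 2)) :
  0 < n ->
  uniquely_extends A ->
  (forall i : 'I_n, ~ exists j1 j2 j3 : 'I_n,
      [/\ j1 != j2, j1 != j3, j2 != j3 &
          [/\ A (i, j1) = None, A (i, j2) = None & A (i, j3) = None]]) /\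
  (forall j : 'I_n, ~ exists i1 i2 i3 : 'I_n,
      [/\ i1 != i2, i1 != i3, i2 != i3 &
          [/\ A (i1, j) = None, A (i2, j) = None & A (i3, j) = None]]).
Proof.
move=> _ HU; split.
- move=> i [j1 [j2 [j3 [d12 d13 d23 [a1 a2 a3]]]]].
  exact: (row_case HU d12 d13 d23 a1 a2 a3).
- move=> j [i1 [i2 [i3 [d12 d13 d23 [a1 a2 a3]]]]].
  apply: (row_case (tr_unique HU) (i := j) d12 d13 d23); by rewrite ffunE.
Qed.
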